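(* Let $\mathcal{C}$ be a conjugacy class of $S_n$ whose elements have $c_j$ $j$-cycles for each $j$, let $2\leq d\leq n$, and let $k\geq1$ with $c_1\geq 2kd$. Let $\mathcal{C}'$ be the conjugacy class of $S_n$ whose elements have $c_1-kd$ fixed points, $c_d+k$ cycles of length $d$, and $c_j$ cycles of length $j$ for every other $j$. Then \[ \frac{|\mathcal{C}|}{|\mathcal{C}'|}\leq\frac{(c_d+k)^kd^k}{(kd)^{kd}}\leq\left(\frac{n}{(kd)^d}\right)^k. \] *)

(* Defs.v *)
From mathcomp Require Import all_boot all_order all_algebra all_fingroup.
Set Implicit Arguments. Unset Strict Implicit. Unset Printing Implicit Defensive.

(* Number of j-cycles of a permutation s of {0,..,n-1}; fixed points are
   the 1-cycles (porbits includes singleton orbits). *)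
Definition cyc_count (n : nat) (s : 'S_n) (j : nat) : nat :=
  #|[set X in porbits s | #|X| == j]|.

(* Main.v *)
Require Import Defs.
From mathcomp Require Import all_boot all_order all_algebra all_fingroup.
From mathcomp Require Import zify.
Set Implicit Arguments. Unset Strict Implicit. Unset Printing Implicit Defensive.
Import GRing.Theory Num.Theory.


Section PermFacts.
Variable T : finType.
Local Open Scope group_scope.
Implicit Types (t u h : {perm T}) (x y : T).

Definition ct t j := #|[set X in porbits t | #|X| == j]|.

Lemma porbit_fconnect t x y : (y \in porbit t x) = fconnect t x y.
Proof.
apply/porbitP/idP => [[i ->]|].
  by rewrite permX fconnect_iter.
rewrite fconnect_orbit => /trajectP [i _ ->]; exists i; by rewrite permX.
Qed.

Lemma order_porbit t x : fingraph.order t x = #|porbit t x|.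
Proof. by apply: eq_card => y; rewrite /= porbit_fconnect. Qed.

Lemma porbit_fix t x : t x = x -> porbit t x = [set x].
Proof.
move=> tx; apply/setP => y; rewrite inE; apply/porbitP/eqP => [[i ->]|->].
  by rewrite permX_fix.
by exists 0%N; rewrite expg0 perm1.
Qed.

Lemma card_porbit1 t x : (#|porbit t x| == 1%N) = (t x == x).
Proof.
apply/idP/eqP => [/cards1P [y Hy]|/porbit_fix ->]; last by rewrite cards1.
have h1 := porbit_id t x; have h2 := mem_porbit t 1%N x.
by move: h1 h2; rewrite Hy !inE expg1 => /eqP -> /eqP.
Qed.

Lemma porbitsP t X : reflect (exists x, X = porbit t x) (X \in porbits t).
Proof. by apply: (iffP imsetP) => [[x _ ->]|[x ->]]; exists x. Qed.

Lemma porbits_mem t x : porbit t x \in porbits t.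
Proof. by apply/porbitsP; exists x. Qed.

Lemma porbit_eq t x y : y \in porbit t x -> porbit t y = porbit t x.
Proof. by move=> H; apply/eqP; rewrite eq_porbit_mem. Qed.

Lemma porbit_tx t x : porbit t (t x) = porbit t x.
Proof. by apply: porbit_eq; rewrite -(expg1 t) mem_porbit. Qed.

Lemma card_fix t : #|[set x | t x == x]| = ct t 1%N.
Proof.
rewrite /ct -(card_in_imset (f := fun x => porbit t x)).
  apply: eq_card => X; rewrite inE; apply/imsetP/andP.
    move=> [x]; rewrite inE => tx ->; split; first by apply/porbitsP; exists x.
    by rewrite card_porbit1.
  move=> [/porbitsP [x ->]] Hx; exists x => //; by rewrite inE -card_porbit1.
move=> x y; rewrite !inE => /eqP/porbit_fix -> /eqP/porbit_fix ->.
move=> /= Eo; by apply/set1P; rewrite -Eo set11.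
Qed.

Lemma card_Pd t j : #|[set y | #|porbit t y| == j]| = (j * ct t j)%N.
Proof.
set P := [set X in porbits t | #|X| == j].
have -> : [set y | #|porbit t y| == j] = cover P.
  apply/setP => y; rewrite inE; apply/idP/bigcupP => [H|[X]].
    exists (porbit t y); last exact: porbit_id.
    by rewrite inE porbits_mem.
  by rewrite inE => /andP [/porbitsP [z ->] /eqP c] yz; rewrite (porbit_eq yz) c.
have triv : trivIset P.
  apply/trivIsetP => A B; rewrite !inE => /andP [/porbitsP [a ->] _].
  move=> /andP [/porbitsP [b ->] _] ne.
  rewrite -setI_eq0; apply/eqP/setP => z; rewrite !inE; apply/negP => /andP [za zb].
  by move: ne; rewrite -(porbit_eq za) -(porbit_eq zb) eqxx.
have := eq_leqif (leq_card_cover P); rewrite triv => /eqP ->.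
rewrite (eq_bigr (fun _ => j)); first by rewrite sum_nat_const mulnC.
by move=> X; rewrite inE => /andP [_ /eqP].
Qed.

Lemma porbit_semiconj h t u x : (forall z, h (t z) = u (h z)) ->
  porbit u (h x) = h @: porbit t x.
Proof.
move=> H.
have It i z : (u ^+ i) (h z) = h ((t ^+ i) z).
  by rewrite !permX; elim: i => //= i ->; rewrite H.
apply/setP => y; apply/porbitP/imsetP => [[i ->]|[z /porbitP [i ->] ->]].
  by exists ((t ^+ i) x); rewrite ?It // mem_porbit.
by exists i; rewrite It.
Qed.

Lemma ct_semiconj h t u j : (forall z, h (t z) = u (h z)) -> ct u j = ct t j.
Proof.
move=> H; rewrite /ct -[#|[set X in porbits t | _]|](card_imset _ (imset_inj (@perm_inj _ h))).
apply: eq_card => Y; rewrite inE.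
apply/andP/imsetP => [[/porbitsP [y ->]] Hy|[X]].
  exists (porbit t (h^-1 y)); last by rewrite -(porbit_semiconj _ H) permKV.
  rewrite inE; apply/andP; split; first by apply/porbitsP; eexists.
  by rewrite -(card_imset _ (@perm_inj _ h)) -(porbit_semiconj _ H) permKV.
rewrite inE => /andP [/porbitsP [x ->] Hx] ->; split.
  by apply/porbitsP; exists (h x); rewrite (porbit_semiconj _ H).
by rewrite card_imset //; exact: perm_inj.
Qed.

Lemma ct_conj t g j : ct (t ^ g)%g j = ct t j.
Proof.
apply: (@ct_semiconj g t (t ^ g)) => z.
by rewrite conjgE !permM permK.
Qed.


Lemma ct_conjugate t u : (forall j, ct t j = ct u j) -> u \in (t ^: setT).
Proof.
move=> Hct.
pose A j := [set X in porbits t | #|X| == j].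
pose B j := [set X in porbits u | #|X| == j].
pose phi (X : {set T}) := nth set0 (enum (B #|X|)) (index X (enum (A #|X|))).
have phiP (X : {set T}) : X \in porbits t -> (phi X \in porbits u) && (#|phi X| == #|X|).
  move=> HX.
  have XA : X \in enum (A #|X|) by rewrite mem_enum inE HX eqxx.
  have : phi X \in B #|X|.
    rewrite -mem_enum /phi; apply: mem_nth.
    have -> : size (enum (B #|X|)) = size (enum (A #|X|)).
      by rewrite -!cardE; exact: (esym (Hct _)).
    by rewrite index_mem.
  by rewrite inE.
have phi_inj : {in porbits t &, injective phi}.
  move=> X Y HX HY Eo.
  have /andP [_ /eqP cX] := phiP X HX; have /andP [_ /eqP cY] := phiP Y HY.
  have cXY : #|X| = #|Y| by rewrite -cX -cY Eo.
  have XA : X \in enum (A #|X|) by rewrite mem_enum inE HX eqxx.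
  have YA : Y \in enum (A #|X|) by rewrite mem_enum inE HY cXY eqxx.
  move: Eo; rewrite /phi -cXY => /eqP; rewrite nth_uniq ?enum_uniq //; last first.
  - have -> : size (enum (B #|X|)) = size (enum (A #|X|)).
      by rewrite -!cardE; exact: (esym (Hct _)).
    by rewrite index_mem.
  - have -> : size (enum (B #|X|)) = size (enum (A #|X|)).
      by rewrite -!cardE; exact: (esym (Hct _)).
    by rewrite index_mem.
  move=> /eqP Eo.
  by rewrite -(nth_index set0 XA) Eo nth_index.
pose pt (X : {set T}) x := odflt x [pick y in phi X].
have ptP x : pt (porbit t x) x \in phi (porbit t x).
  rewrite /pt; case: pickP => [y //|H0].
  have /andP [_ /eqP c] := phiP _ (porbits_mem t x).
  have : #|phi (porbit t x)| == 0%N by apply/eqP; apply: eq_card0 => y; rewrite /= H0.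
  by rewrite c (negbTE (card_porbit_neq0 _ _)).
have ptE x z : pt (porbit t x) z = pt (porbit t x) x.
  have := ptP x; rewrite /pt; case: pickP => // H0; by rewrite H0.
have phiE x : phi (porbit t x) = porbit u (pt (porbit t x) x).
  have /andP [/porbitsP [z Hz] _] := phiP _ (porbits_mem t x).
  by have := ptP x; rewrite Hz => /porbit_eq ->.
have tinj : injective t := @perm_inj _ t.
have uinj : injective u := @perm_inj _ u.
have symt := fconnect_sym tinj.
pose r x := froot t x.
have rx x : fconnect t (r x) x by rewrite symt; apply: connect_root.
have rtx x : r (t x) = r x.
  by apply/eqP; rewrite eq_sym (root_connect (fconnect_sym tinj)) fconnect1.
have prx x : porbit t (r x) = porbit t x.
  by apply: porbit_eq; rewrite porbit_fconnect; apply: connect_root.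
have ordE x : fingraph.order u (pt (porbit t x) x) = fingraph.order t (r x).
  rewrite !order_porbit -phiE prx.
  by have /andP [_ /eqP ->] := phiP _ (porbits_mem t x).
pose g x := iter (findex t (r x) x) u (pt (porbit t x) x).
have gt x : g (t x) = u (g x).
  rewrite /g rtx porbit_tx (ptE x (t x)).
  have mlt := findex_max (rx x).
  have tE : t x = iter (findex t (r x) x).+1 t (r x) by rewrite iterS iter_findex.
  move: mlt; rewrite leq_eqVlt => /orP [/eqP EN| lt].
    have -> : findex t (r x) (t x) = 0%N.
      by rewrite tE EN iter_order // findex0.
    by rewrite -iterS EN -ordE iter_order.
  by rewrite {1}tE findex_iter.
have ginj : injective g.
  move=> x x' Eo.
  have gX z : g z \in phi (porbit t z).
    by rewrite phiE porbit_fconnect fconnect_iter.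
  have gP z : phi (porbit t z) = porbit u (g z).
    by rewrite phiE; symmetry; apply: porbit_eq; rewrite -phiE.
  have EX : porbit t x = porbit t x'.
    by apply: phi_inj; rewrite ?porbits_mem // !gP Eo.
  have Er : r x = r x'.
    apply/eqP; rewrite (root_connect (fconnect_sym tinj)) -porbit_fconnect.
    by rewrite EX porbit_id.
  have Ey : pt (porbit t x') x' = pt (porbit t x) x by rewrite -EX ptE.
  move: Eo; rewrite /g Ey -Er => Eo.
  have m1 := findex_max (rx x); have m2 := findex_max (rx x').
  rewrite -Er -ordE in m1 m2.
  rewrite -(iter_findex (rx x)) -(iter_findex (rx x')) -Er; congr iter.
  by rewrite -(findex_iter m1) Eo findex_iter.
have EG : u = (t ^ perm ginj).
  apply/permP => y; rewrite conjgE !permM permE.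
  by rewrite gt -[y in LHS](permKV (perm ginj)) permE.
by rewrite EG memJ_class ?inE.
Qed.

End PermFacts.

Section Modif.
Variables (T : finType) (k dd : nat).
Local Notation d := dd.+2.
Local Notation D := ('I_k * 'I_d)%type.
Implicit Types (x : {ffun D -> T}) (t : {perm T}).

Definition sigf x (y : T) : T :=
  if [pick p | x p == y] is Some p then x (p.1, ordS p.2) else y.

Lemma sigf_x x p : injective x -> sigf x (x p) = x (p.1, ordS p.2).
Proof.
move=> xi; rewrite /sigf; case: pickP => [p' /eqP /xi -> //|H].
by have := H p; rewrite eqxx.
Qed.

Lemma sigf_out x y : (forall p, x p != y) -> sigf x y = y.
Proof.
move=> H; rewrite /sigf; case: pickP => [p' /eqP Eo|//].
by have := H p'; rewrite Eo eqxx.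
Qed.

Lemma sigf_inj x : injective x -> injective (sigf x).
Proof.
move=> xi y y'.
case: (pickP (fun p => x p == y)) => [p /eqP <-|Hy];
case: (pickP (fun p => x p == y')) => [p' /eqP <-|Hy'].
- rewrite !sigf_x // => /xi Eo; have E1 := f_equal fst Eo.
  have E3 := ordS_inj (f_equal snd Eo); simpl in E1, E3.
  by move: E1 E3 {Eo}; case: p => [? ?]; case: p' => [? ?] /= -> ->.
- rewrite sigf_x // sigf_out => [Eo|p'']; last by rewrite Hy'.
  by have := Hy' (p.1, ordS p.2); rewrite Eo eqxx.
- rewrite sigf_x // sigf_out => [Eo|p'']; last by rewrite Hy.
  by have := Hy (p'.1, ordS p'.2); rewrite Eo eqxx.
- by rewrite !sigf_out // => p; [rewrite Hy' | rewrite Hy].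
Qed.

Definition sigx x : {perm T} :=
  match injectiveP x with ReflectT h => perm (sigf_inj h) | ReflectF _ => 1%g end.

Lemma sigE x : injective x -> sigx x =1 sigf x.
Proof.
rewrite /sigx; case: injectiveP => // h _ y; by rewrite permE.
Qed.

Variables (t : {perm T}) (x : {ffun D -> T}).
Hypothesis xinj : injective x.
Hypothesis xfix : forall p, t (x p) = x p.

Definition tm : {perm T} := (t * sigx x)%g.
Definition Rng := [set x p | p : D].
Definition Blk (b : 'I_k) := [set x (b, j) | j : 'I_d].

Lemma tm_x p : tm (x p) = x (p.1, ordS p.2).
Proof. by rewrite /tm permM xfix sigE // sigf_x. Qed.

Lemma notR_porbit y : y \notin Rng -> forall z, z \in porbit t y -> z \notin Rng.
Proof.
move=> yR z zP; apply/negP => /imsetP [p _ Eo]; subst z.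
move: zP; rewrite porbit_sym porbit_fix // inE => /eqP Eo.
by move: yR; rewrite Eo imset_f.
Qed.

Lemma tm_out y : y \notin Rng -> tm y = t y.
Proof.
move=> yR; rewrite /tm permM sigE // sigf_out // => p; apply/eqP => Eo.
have : t y \in Rng by rewrite -Eo imset_f.
by rewrite (negbTE (notR_porbit yR (mem_porbit t 1%N y))).
Qed.

Lemma porbit_tm_out y : y \notin Rng -> porbit tm y = porbit t y.
Proof.
move=> yR.
have It m : (tm ^+ m)%g y = (t ^+ m)%g y.
  elim: m => [|m IH]; first by rewrite !expg0 !perm1.
  rewrite !expgSr !permM IH.
  by have := tm_out (notR_porbit yR (mem_porbit t m y)); rewrite /tm permM.
by apply/setP => z; apply/porbitP/porbitP => [[m ->]|[m ->]]; exists m.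
Qed.

Lemma iter_ordS (i : 'I_d) m : val (iter m (@ordS d) i) = (i + m) %% d.
Proof.
elim: m => [|m IH] /=; first by rewrite addn0 modn_small.
by rewrite IH -addn1 modnDml addn1 addnS.
Qed.

Lemma tm_iter b (i : 'I_d) m : (tm ^+ m)%g (x (b, i)) = x (b, iter m (@ordS d) i).
Proof.
elim: m => [|m IH]; first by rewrite expg0 perm1.
by rewrite expgSr permM IH tm_x.
Qed.

Lemma porbit_tm_x b i : porbit tm (x (b, i)) = Blk b.
Proof.
apply/setP => z; apply/porbitP/imsetP => [[m ->]|[j _ ->]].
  by rewrite tm_iter; eexists.
exists (j + (d - i)); rewrite tm_iter; congr (x (b, _)); apply: val_inj.
rewrite iter_ordS addnCA subnKC; last exact: ltnW.
by rewrite modnDr modn_small.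
Qed.

Lemma card_Blk b : #|Blk b| = d.
Proof. by rewrite card_imset ?card_ord // => j j' /xinj [->]. Qed.


Definition Eo := [set porbit t y | y in ~: Rng].
Definition Blkss := [set Blk b | b : 'I_k].
Definition S1 := [set [set x p] | p : D].

Lemma porbits_tm : porbits tm = Eo :|: Blkss.
Proof.
apply/setP => X; rewrite inE; apply/porbitsP/orP => [[y ->]|[]].
- case: (boolP (y \in Rng)) => [/imsetP [p _ ->]|yR].
    by right; case: p => b i; rewrite porbit_tm_x imset_f.
  by left; rewrite porbit_tm_out // imset_f // inE.
- by case/imsetP => y; rewrite inE => yR ->; exists y; rewrite porbit_tm_out.
- by case/imsetP => b _ ->; exists (x (b, ord0)); rewrite porbit_tm_x.
Qed.

Lemma porbits_t : porbits t = Eo :|: S1.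
Proof.
apply/setP => X; rewrite inE; apply/porbitsP/orP => [[y ->]|[]].
- case: (boolP (y \in Rng)) => [/imsetP [p _ ->]|yR].
    by right; rewrite porbit_fix // imset_f.
  by left; rewrite imset_f // inE.
- by case/imsetP => y; rewrite inE => yR ->; exists y.
- by case/imsetP => p _ ->; exists (x p); rewrite porbit_fix.
Qed.

Lemma disj_E (F : {set {set T}}) :
  (forall X, X \in F -> exists2 p, x p \in X & True) -> [disjoint Eo & F].
Proof.
move=> HF; rewrite -setI_eq0; apply/eqP/setP => X; rewrite !inE.
apply/negP => /andP [/imsetP [y]]; rewrite inE => yR -> /HF [p Hp _].
by have := notR_porbit yR Hp; rewrite imset_f.
Qed.

Lemma card_split (A B : {set {set T}}) (P : pred {set T}) : [disjoint A & B] ->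
  #|[set X in A :|: B | P X]| = #|[set X in A | P X]| + #|[set X in B | P X]|.
Proof.
move=> dAB.
have -> : [set X in A :|: B | P X] = [set X in A | P X] :|: [set X in B | P X].
  by apply/setP => X; rewrite !inE andb_orl.
rewrite cardsU; have -> : [set X in A | P X] :&: [set X in B | P X] = set0.
  apply/setP => X; rewrite !inE; apply/negP => /andP [/andP [XA _] /andP [XB _]].
  by move: dAB; rewrite -setI_eq0 => /eqP/setP/(_ X); rewrite !inE XA XB.
by rewrite cards0 subn0.
Qed.

Lemma Blk_inj : injective Blk.
Proof.
move=> b b' E1.
have : x (b, ord0) \in Blk b' by rewrite -E1; apply: imset_f.
by case/imsetP => j _ /xinj [].
Qed.

Lemma ct_tm j : ct tm j = #|[set X in Eo | #|X| == j]| + (j == d) * k.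
Proof.
rewrite /ct porbits_tm card_split; last first.
  apply: disj_E => X /imsetP [b _ ->]; exists (b, ord0) => //; exact: imset_f.
congr (_ + _); case: eqP => [->|ne].
  rewrite mul1n -[k in RHS]card_ord -(card_imset _ Blk_inj); apply: eq_card => X.
  rewrite !inE andb_idr // => /imsetP [b _ ->]; by rewrite card_Blk.
rewrite mul0n; apply: eq_card0 => X; rewrite !inE.
apply/negP => /andP [/imsetP [b _ ->]]; rewrite card_Blk => /eqP E1.
by apply: ne; rewrite E1.
Qed.

Lemma ct_t j : ct t j = #|[set X in Eo | #|X| == j]| + (j == 1%N) * (k * d).
Proof.
rewrite /ct porbits_t card_split; last first.
  apply: disj_E => X /imsetP [p _ ->]; exists p => //; exact: set11.
congr (_ + _); case: eqP => [->|ne].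
  have S1inj : injective (fun p : D => [set x p]).
    by move=> p p' /set1_inj /xinj.
  rewrite mul1n -[k]card_ord -[d]card_ord -card_prod -(card_imset _ S1inj).
  apply: eq_card => X; rewrite !inE andb_idr // => /imsetP [p _ ->].
  by rewrite cards1.
rewrite mul0n; apply: eq_card0 => X; rewrite !inE.
apply/negP => /andP [/imsetP [p _ ->]]; rewrite cards1 => /eqP E1.
by apply: ne; rewrite E1.
Qed.

End Modif.

Import GRing.Theory Num.Theory.

Lemma ffact_lb a m : a ^ m <= (a + m) ^_ m.
Proof.
elim: m => [|m IH] //; rewrite ffactnS addnS /= expnS.
by apply: leq_mul => //; lia.
Qed.

Lemma ffact_lb2 c m : 2 * m <= c -> m ^ m <= c ^_ m.
Proof.
move=> H; have -> : c = (c - m) + m by lia.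
apply: leq_trans (ffact_lb _ _); case: m H => [//|m] H.
rewrite leq_exp2r //; lia.
Qed.

Lemma key (n k dd : nat) (s s' : 'S_n) :
  (1 <= k) -> 2*k*dd.+2 <= ct s 1 -> ct s' 1 = ct s 1 - k*dd.+2 ->
  ct s' dd.+2 = ct s dd.+2 + k ->
  (forall j, j != 1 -> j != dd.+2 -> ct s' j = ct s j) ->
  #|(s ^: [set: 'S_n])%g| * (ct s 1) ^_ (k*dd.+2)
    <= #|(s' ^: [set: 'S_n])%g| * (dd.+2 * (ct s dd.+2 + k)) ^ k.
Proof.
move=> k1 H1 H1' Hd Hj.
set d := dd.+2.
set C := (s ^: _)%g; set C' := (s' ^: _)%g.
have ctC t j : t \in C -> ct t j = ct s j by move=> /imsetP [g _ ->]; rewrite ct_conj.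
have ctC' t j : t \in C' -> ct t j = ct s' j by move=> /imsetP [g _ ->]; rewrite ct_conj.
pose D := ('I_k * 'I_d)%type.
pose P1 := [set tx : {perm 'I_n} * {ffun D -> 'I_n} |
   [&& tx.1 \in C, injectiveb tx.2 & [forall p, tx.1 (tx.2 p) == tx.2 p]]].
have cardP1 : #|P1| = #|C| * (ct s 1) ^_ (k*d).
  have -> : #|P1| = \sum_(t in C)
      \sum_(x : {ffun D -> 'I_n} | injectiveb x && [forall p, t (x p) == x p]) 1.
    by rewrite pair_big_dep /= -sum1_card; apply: eq_bigl => tx; rewrite inE.
  rewrite -sum_nat_const; apply: eq_bigr => t tC.
  rewrite sum1dep_card -(ctC t 1 tC) -card_fix.
  have -> : (k * d = #|{: 'I_k * 'I_d}|) by rewrite card_prod !card_ord.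
  rewrite -card_inj_ffuns_on; apply: eq_card => x; rewrite !inE andbC.
  congr (_ && _); apply/forallP/ffun_onP => H p; by have := H p; rewrite inE.
pose Pd (u : {perm 'I_n}) := [set y | #|porbit u y| == d].
pose Q := [set ty : {perm 'I_n} * {ffun 'I_k -> 'I_n} |
   (ty.1 \in C') && (ty.2 \in ffun_on (Pd ty.1))].
have cardQ : #|Q| = #|C'| * (d * (ct s d + k)) ^ k.
  have -> : #|Q| = \sum_(u in C') \sum_(y : {ffun 'I_k -> 'I_n} | y \in ffun_on (Pd u)) 1.
    by rewrite pair_big_dep /= -sum1_card; apply: eq_bigl => tx; rewrite inE.
  rewrite -sum_nat_const; apply: eq_bigr => u uC.
  rewrite sum1dep_card.
  transitivity #|ffun_on_mem 'I_k (mem (Pd u))|; first by apply: eq_card => y; rewrite ?inE.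
  by rewrite card_ffun_on card_ord card_Pd ctC' // Hd.
pose Phi (tx : {perm 'I_n} * {ffun D -> 'I_n}) :=
  (tm tx.1 tx.2, [ffun b : 'I_k => tx.2 (b, ord0)]).
have inP1 tx : tx \in P1 ->
    [/\ tx.1 \in C, injective tx.2 & forall p, tx.1 (tx.2 p) = tx.2 p].
  rewrite inE => /and3P [a /injectiveP b /forallP c]; split => // p; exact/eqP/c.
have Phiinj : {in P1 &, injective Phi}.
  move=> [t x] [t2 x2] /inP1 [_ xi xf] /inP1 [_ xi2 xf2] [] /= E1 E2.
  have Ex : x = x2.
    apply/ffunP => [[b i]].
    have it (y : {ffun D -> 'I_n}) (t0 : {perm 'I_n}) (yi: injective y)
        (yf : forall p, t0 (y p) = y p) : y (b,i) = (tm t0 y ^+ i)%g (y (b, ord0)).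
      rewrite (tm_iter yi yf); congr (y (b,_)); apply: val_inj.
      by rewrite iter_ordS add0n modn_small.
    rewrite (it x t) // (it x2 t2) // E1.
    by have := congr1 (fun f : {ffun 'I_k -> 'I_n} => f b) E2; rewrite !ffunE => ->.
  subst x2; congr pair; exact: (mulIg _ _ _ E1).
have PhiQ : Phi @: P1 \subset Q.
  apply/subsetP => _ /imsetP [[t x] /inP1 [tC xi xf] ->]; rewrite inE /=.
  apply/andP; split.
    apply: ct_conjugate => j; rewrite (ct_tm xi xf).
    have := ct_t xi xf j; rewrite /= (ctC t j tC).
    case: (eqVneq j 1) => [->|n1]; [|case: (eqVneq j d) => [->|nd]].
    - by rewrite H1' => ->; rewrite mul1n mul0n addnK addn0.
    - by rewrite Hd => ->; rewrite ?eqxx mul1n mul0n addn0.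
    - by rewrite Hj // => ->; rewrite (negbTE n1) (negbTE nd) !mul0n.
  apply/ffun_onP => b; rewrite ffunE inE (porbit_tm_x xi xf) card_Blk //.
rewrite -cardP1 -cardQ -(card_in_imset Phiinj); exact: subset_leq_card PhiQ.
Qed.

Local Open Scope ring_scope.

Theorem lemma5p6 (n d k : nat) (s s' : 'S_n) :
  (2 <= d)%N -> (d <= n)%N -> (1 <= k)%N ->
  (2 * k * d <= cyc_count s 1)%N ->
  cyc_count s' 1 = (cyc_count s 1 - k * d)%N ->
  cyc_count s' d = (cyc_count s d + k)%N ->
  (forall j, j != 1%N -> j != d -> cyc_count s' j = cyc_count s j) ->
  let C := (s ^: [set: 'S_n])%g in
  let C' := (s' ^: [set: 'S_n])%g in
  (#|C|%:R / #|C'|%:R : rat)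
    <= ((cyc_count s d + k) ^ k * d ^ k)%N%:R / ((k * d) ^ (k * d))%N%:R
  /\ ((cyc_count s d + k) ^ k * d ^ k)%N%:R / ((k * d) ^ (k * d))%N%:R
    <= (n%:R / ((k * d) ^ d)%N%:R : rat) ^+ k.
Proof.
move=> d2 dn k1 H1 H1' Hd Hj C C'.
case: d d2 dn H1 H1' Hd Hj => [|[|dd]] // _ dn H1 H1' Hd Hj.
have K := key k1 H1 H1' Hd Hj.
have L : ((k * dd.+2) ^ (k * dd.+2) <= (cyc_count s 1) ^_ (k * dd.+2))%N.
  by apply: ffact_lb2; rewrite mulnA.
have C'0 : (0 < #|C'|)%N by apply/card_gt0P; exists s'; exact: class_refl.
have Y0 : (0 < (k * dd.+2) ^ (k * dd.+2))%N by rewrite expn_gt0 muln_gt0 k1.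
have Pn : (dd.+2 * (cyc_count s dd.+2 + k) <= n)%N.
  have := card_Pd s' dd.+2; rewrite /ct -/(cyc_count s' dd.+2) Hd => <-.
  by apply: leq_trans (max_card _) _; rewrite card_ord.
split.
  rewrite ler_pdivrMr ?ltr0n // mulrAC ler_pdivlMr ?ltr0n // -!natrM ler_nat.
  apply: leq_trans (leq_mul (leqnn _) L) _.
  rewrite /C /C'; apply: (leq_trans K); rewrite mulnC expnMn.
  by rewrite [(dd.+2 ^ k * _)%N]mulnC.
rewrite expr_div_n -!natrX -expnM (mulnC dd.+2 k).
apply: ler_wpM2r; first by rewrite invr_ge0 ler0n.
by rewrite ler_nat -expnMn leq_exp2r // mulnC.
Qed.
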